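(* Assume $\mathsf{CH}$. There is a strongly tight MAD family $\mathcal{A}$ with $\mathcal{A}\subseteq\mathcal{J}_{1/n}$ (in particular, $\mathcal{A}$ is random destructible and not Laflamme).
   Context: A MAD family is a maximal family of infinite subsets of $\omega$ with pairwise finite intersections; $\mathcal{I}(\mathcal{A})$ is the ideal generated by $\mathcal{A}$ and the finite sets. The summable ideal is $\mathcal{J}_{1/n}=\{A\subseteq\omega:\sum_{n\in A}\frac1{n+1}<\infty\}$. An ideal $\mathcal{I}$ is strongly tight if for every $\{X_n:n\in\omega\}\subseteq[\omega]^\omega$ such that $\{n:X_n\subseteq^*Y\}$ is finite for every $Y\in\mathcal{I}$, there is $A\in\mathcal{I}$ meeting every $X_n$; $\mathcal{A}$ is strongly tight if $\mathcal{I}(\mathcal{A})$ is. $\mathcal{A}$ is random destructible if forcing with random forcing (below some condition) makes $\mathcal{A}$ no longer maximal. $\mathcal{A}$ is Laflamme if $\mathcal{I}(\mathcal{A})$ cannot be extended to an $F_\sigma$ ideal. *)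

(* Defs.v *)
(* Subsets of omega are represented as characteristic
   functions nat -> bool; families of subsets as predicates on them. *)
From Stdlib Require Import Reals Lra Lia Arith List Bool.
Open Scope R_scope.

Definition Sub := nat -> bool.

Definition inter (X Y : Sub) : Sub := fun n => X n && Y n.
Definition union (X Y : Sub) : Sub := fun n => X n || Y n.
Definition emptyS : Sub := fun _ => false.
Definition fullS : Sub := fun _ => true.
Definition union_list (l : list Sub) : Sub := fold_right union emptyS l.
Definition subsetS (X Y : Sub) : Prop := forall n, X n = true -> Y n = true.

Definition finiteS (X : Sub) : Prop := exists m, forall n, X n = true -> (n < m)%nat.
Definition infiniteS (X : Sub) : Prop := ~ finiteS X.
Definition finiteP (P : nat -> Prop) : Prop := exists m, forall n, P n -> (n < m)%nat.

Definition almost_subset (X Y : Sub) : Prop :=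
  finiteS (fun n => X n && negb (Y n)).

Definition AD_family (A : Sub -> Prop) : Prop :=
  (forall X, A X -> infiniteS X) /\
  (forall X Y, A X -> A Y -> X <> Y -> finiteS (inter X Y)).

Definition MAD (A : Sub -> Prop) : Prop :=
  AD_family A /\
  (forall B : Sub -> Prop, AD_family B -> (forall X, A X -> B X) -> forall X, B X -> A X).

Definition gen_ideal (A : Sub -> Prop) (Y : Sub) : Prop :=
  exists l : list Sub, Forall A l /\ almost_subset Y (union_list l).

Definition strongly_tight_ideal (I : Sub -> Prop) : Prop :=
  forall Xs : nat -> Sub,
    (forall n, infiniteS (Xs n)) ->
    (forall Y, I Y -> finiteP (fun n => almost_subset (Xs n) Y)) ->
    exists A, I A /\ forall n, exists k, A k = true /\ Xs n k = true.

Definition strongly_tight (A : Sub -> Prop) : Prop := strongly_tight_ideal (gen_ideal A).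

Fixpoint psum (A : Sub) (N : nat) : R :=
  match N with
  | O => 0
  | S N' => psum A N' + (if A N' then / INR (S N') else 0)
  end.

Definition summable (A : Sub) : Prop := exists M : R, forall N, psum A N <= M.

Definition is_ideal (J : Sub -> Prop) : Prop :=
  (forall X Y, J Y -> subsetS X Y -> J X) /\
  (forall X Y, J X -> J Y -> J (union X Y)) /\
  (forall X, finiteS X -> J X) /\
  ~ J fullS.

(* closed sets in the Cantor-space topology on P(omega) = 2^omega *)
Definition closedS (C : Sub -> Prop) : Prop :=
  forall f, ~ C f -> exists n, forall g, (forall i, (i < n)%nat -> g i = f i) -> ~ C g.

Definition F_sigma (J : Sub -> Prop) : Prop :=
  exists C : nat -> (Sub -> Prop), (forall k, closedS (C k)) /\
    forall X, J X <-> exists k, C k X.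

Definition Laflamme (A : Sub -> Prop) : Prop :=
  ~ exists J, is_ideal J /\ F_sigma J /\ (forall Y, gen_ideal A Y -> J Y).

Definition CH : Prop :=
  forall X : Sub -> Prop,
    (exists f : nat -> Sub, forall x, X x -> exists n, f n = x) \/
    (exists g : Sub -> Sub, (forall x, X (g x)) /\
       (forall x y, g x = g y -> x = y) /\
       (forall y, X y -> exists x, g x = y)).

(* Main.v *)
Require Import Defs.
From mathcomp Require ssreflect ssrfun ssrbool eqtype ssrnat boolp wochoice.
Module WO.
Import ssreflect ssrfun ssrbool eqtype ssrnat boolp wochoice.

Lemma wo_props : exists R : Defs.Sub -> Defs.Sub -> bool,
  (forall P : Defs.Sub -> Prop, (exists x, P x) -> exists z, P z /\ forall x, P x -> R z x = true) /\
  (forall x y, R x y = true -> R y x = true -> x = y) /\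
  (forall x y, R x y = true \/ R y x = true).
Proof.
have [R wR] := well_ordering_principle (nat -> bool : eqType).
have hmin : forall P : Defs.Sub -> Prop, (exists x, P x) -> exists z, P z /\ forall x, P x -> R z x = true.
  move=> P [x Px].
  have [z [[zA lb] _]] := wR (fun y : Defs.Sub => `[< P y >]) (ex_intro _ x (introT (asboolP _) Px)).
  exists z; split; first exact: (elimT (asboolP _) zA).
  move=> y Py; apply: lb; exact: (introT (asboolP _) Py).
have refl : forall x, R x x = true.
  move=> x; have [z [Pz H]] := hmin (fun y : Defs.Sub => y = x) (ex_intro _ x erefl).
  by subst z; apply: H.
exists R; split=> //; split.
- move=> x y Rxy Ryx.
  have [z [[zA lb] U]] := wR (fun w : Defs.Sub => `[< w = x \/ w = y >]) (ex_intro _ x (introT (asboolP _) (or_introl erefl))).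
  have ex : z = x.
    apply: U; split; first exact: (introT (asboolP _) (or_introl erefl)).
    move=> w /asboolP [->|->]; [exact: refl| exact: Rxy].
  have ey : z = y.
    apply: U; split; first exact: (introT (asboolP _) (or_intror erefl)).
    move=> w /asboolP [->|->]; [exact: Ryx| exact: refl].
  by rewrite -ex -ey.
- move=> x y.
  have [z [Pz H]] := hmin (fun w : Defs.Sub => w = x \/ w = y) (ex_intro _ x (or_introl erefl)).
  case: Pz => E; subst z.
  + left; apply: H; by right.
  + right; apply: H; by left.
Qed.
End WO.
From Stdlib Require Import Reals Lra Lia Arith List Bool Classical ClassicalEpsilon FunctionalExtensionality Wellfounded Cantor.
Open Scope R_scope.

Definition countableP (P : Sub -> Prop) : Prop :=
  exists e : nat -> Sub, forall x, P x -> exists n, e n = x.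

Lemma good_order : CH -> exists lt : Sub -> Sub -> Prop,
  well_founded lt /\ (forall a b, a <> b -> lt a b \/ lt b a) /\
  (forall t, countableP (fun s => lt s t)).
Proof.
  intro ch.
  destruct WO.wo_props as [R [Rmin [Ranti Rtot]]].
  set (lt := fun x y => R x y = true /\ x <> y).
  assert (wf : well_founded lt).
  { intro x. apply NNPP. intro nA.
    destruct (Rmin (fun y => ~ Acc lt y) (ex_intro _ x nA)) as [z [nz zmin]].
    apply nz. constructor. intros y [Ryz neq]. apply NNPP. intro nAy.
    apply neq. apply Ranti; auto. }
  assert (tot : forall a b, a <> b -> lt a b \/ lt b a).
  { intros a b ne. destruct (Rtot a b); [left|right]; split; auto. }
  destruct (classic (exists x, ~ countableP (fun s => lt s x))) as [[x nc] | allc].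
  - destruct (Rmin (fun y => ~ countableP (fun s => lt s y)) (ex_intro _ x nc)) as [x0 [nc0 min0]].
    destruct (ch (fun s => lt s x0)) as [c | [g [gS [ginj _]]]].
    + contradiction.
    + exists (fun a b => lt (g a) (g b)). split; [|split].
      * apply wf_inverse_image. exact wf.
      * intros a b ne. apply tot. intro E. apply ne, ginj, E.
      * intro b. assert (cb : countableP (fun s => lt s (g b))).
        { apply NNPP. intro ncb. specialize (min0 _ ncb).
          destruct (gS b) as [Rb nb]. apply nb. apply Ranti; auto. }
        destruct cb as [e he].
        exists (fun k => match excluded_middle_informative (exists a, g a = e k) with
                        | left h => proj1_sig (constructive_indefinite_description _ h)
                        | right _ => fun _ => false end).
        intros a ha. destruct (he _ ha) as [k hk]. exists k.
        destruct (excluded_middle_informative (exists a0, g a0 = e k)) as [h|h].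
        -- destruct (constructive_indefinite_description _ h) as [a' ha']. simpl.
           apply ginj. congruence.
        -- exfalso. apply h. exists a. auto.
  - exists lt. split; [exact wf|split; [exact tot|]].
    intro t. apply NNPP. intro n. apply allc. exists t. exact n.
Qed.

Lemma term_ge0 (X : Sub) (N : nat) : 0 <= (if X N then / INR (S N) else 0).
Proof. destruct (X N); [|lra]. left. apply Rinv_0_lt_compat. apply lt_0_INR. lia. Qed.

Lemma term_le1 (X : Sub) (N : nat) : (if X N then / INR (S N) else 0) <= 1.
Proof. destruct (X N); [|lra]. rewrite <- Rinv_1. apply Rinv_le_contravar; [lra|].
  rewrite S_INR. pose proof (pos_INR N). lra. Qed.

Lemma psum_ge0 X N : 0 <= psum X N.
Proof. induction N; cbn [psum]; [lra|]. pose proof (term_ge0 X N). lra. Qed.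

Lemma psum_mono X Y N : (forall x, (x < N)%nat -> X x = true -> Y x = true) -> psum X N <= psum Y N.
Proof.
  induction N; intro H; cbn [psum]; [lra|].
  assert (IH : psum X N <= psum Y N) by (apply IHN; intros; apply H; auto; lia).
  destruct (X N) eqn:E.
  - rewrite (H N) by (auto; lia). lra.
  - pose proof (term_ge0 Y N). lra.
Qed.

Lemma psum_ext X Y N : (forall x, (x < N)%nat -> X x = Y x) -> psum X N = psum Y N.
Proof.
  induction N; intro H; cbn [psum]; [lra|].
  rewrite IHN by (intros; apply H; lia). rewrite (H N) by lia. reflexivity.
Qed.

Lemma psum_union X Y N : psum (union X Y) N <= psum X N + psum Y N.
Proof.
  induction N; cbn [psum]; [lra|].
  assert (E : union X Y N = (X N || Y N)%bool) by reflexivity. rewrite E. pose proof (term_ge0 X N). pose proof (term_ge0 Y N).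
  destruct (X N), (Y N); cbn [orb]; lra.
Qed.

Lemma psum_le_N X N : psum X N <= INR N.
Proof. induction N; [simpl; lra|cbn [psum]]. pose proof (term_le1 X N). rewrite S_INR in *. lra. Qed.

Lemma psum_stable X m N : (forall x, X x = true -> (x < m)%nat) -> (m <= N)%nat -> psum X N = psum X m.
Proof.
  intros H. induction N; intro le.
  - assert (m = 0%nat) by lia. subst. reflexivity.
  - destruct (Nat.eq_dec m (S N)) as [->|ne]; [reflexivity|].
    cbn [psum]. rewrite IHN by lia. destruct (X N) eqn:E; [|lra].
    specialize (H _ E). lia.
Qed.

Lemma summable_sub X Y : summable Y -> subsetS X Y -> summable X.
Proof. intros [M HM] s. exists M. intro N. eapply Rle_trans; [|apply (HM N)]. apply psum_mono. auto. Qed.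

Lemma summable_union X Y : summable X -> summable Y -> summable (union X Y).
Proof. intros [M HM] [M' HM']. exists (M + M'). intro N. pose proof (psum_union X Y N).
  pose proof (HM N). pose proof (HM' N). lra. Qed.

Lemma summable_finite X : finiteS X -> summable X.
Proof.
  intros [m Hm]. exists (INR m). intro N. destruct (le_lt_dec m N) as [le|lt].
  - rewrite (psum_stable X m N Hm le). apply psum_le_N.
  - eapply Rle_trans; [apply psum_le_N|]. apply le_INR. lia.
Qed.

Lemma summable_almost Y Z : almost_subset Y Z -> summable Z -> summable Y.
Proof.
  intros H sZ. apply (summable_sub Y (union Z (fun n => Y n && negb (Z n)))).
  - apply summable_union; auto. apply summable_finite. exact H.
  - intros n Yn. unfold union. rewrite Yn. destruct (Z n); reflexivity.
Qed.

Lemma harm_step N k : (1 <= N)%nat -> psum fullS (N + k) >= psum fullS N + INR k / INR (N + k).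
Proof.
  intro hN. induction k.
  - rewrite Nat.add_0_r. unfold Rdiv. rewrite Rmult_0_l. lra.
  - replace (N + S k)%nat with (S (N + k)) by lia. cbn [psum]. unfold fullS in IHk |- *.
    assert (p : 0 < INR (N + k)) by (apply lt_0_INR; lia).
    rewrite S_INR. rewrite S_INR.
    assert (INR k / (INR (N + k) + 1) <= INR k / INR (N+k)).
    { unfold Rdiv. apply Rmult_le_compat_l; [apply pos_INR|]. apply Rinv_le_contravar; lra. }
    replace ((INR k + 1) / (INR (N + k) + 1)) with (INR k / (INR (N + k) + 1) + / (INR (N + k) + 1)) by (field; lra).
    lra.
Qed.

Lemma harm_pow j : psum fullS (2 ^ j) >= INR j / 2.
Proof.
  induction j.
  - unfold Rdiv. rewrite Rmult_0_l. apply Rle_ge, psum_ge0.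
  - assert (h1 : (1 <= 2 ^ j)%nat) by (apply Nat.le_succ_l, Nat.neq_0_lt_0, Nat.pow_nonzero; lia).
    pose proof (harm_step (2 ^ j) (2 ^ j) h1) as H.
    replace (2 ^ S j)%nat with (2 ^ j + 2 ^ j)%nat by (simpl; lia).
    assert (p : 0 < INR (2 ^ j)) by (apply lt_0_INR; lia).
    rewrite plus_INR in H. replace (INR (2 ^ j) / (INR (2 ^ j) + INR (2 ^ j))) with (1/2) in H by (field; lra).
    rewrite S_INR. lra.
Qed.

Lemma not_summable_full : ~ summable fullS.
Proof.
  intros [M HM]. destruct (INR_unbounded (2 * M)) as [j hj].
  pose proof (HM (2 ^ j)%nat). pose proof (harm_pow j). lra.
Qed.

Lemma finite_sub X Y : finiteS Y -> subsetS X Y -> finiteS X.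
Proof. intros [m Hm] s. exists m. intros n Xn. apply Hm, s, Xn. Qed.

Lemma finite_union X Y : finiteS X -> finiteS Y -> finiteS (union X Y).
Proof.
  intros [m Hm] [m' Hm']. exists (m + m')%nat. intros n U. unfold union in U.
  apply orb_true_iff in U. destruct U as [U|U]; [specialize (Hm _ U)|specialize (Hm' _ U)]; lia.
Qed.

Lemma L_fin l X Y : Forall (fun Z => finiteS (inter X Z)) l -> almost_subset Y (union_list l) ->
  finiteS (inter X Y).
Proof.
  intros Hl HY.
  assert (F : finiteS (inter X (union_list l))).
  { clear HY. induction Hl as [|Z l HZ Hl IH]; simpl.
    - exists 0%nat. intros n H. unfold inter, emptyS in H. rewrite andb_false_r in H. discriminate.
    - apply (finite_sub _ (union (inter X Z) (inter X (union_list l)))).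
      + apply finite_union; auto.
      + intros n H. unfold inter, union in *. apply andb_true_iff in H as [H1 H2].
        apply orb_true_iff in H2 as [H2|H2]; rewrite H1, H2; simpl; auto using orb_true_r. }
  apply (finite_sub _ (union (inter X (union_list l)) (fun n => Y n && negb (union_list l n)))).
  - apply finite_union; auto.
  - intros n H. unfold inter, union in *. apply andb_true_iff in H as [H1 H2].
    rewrite H1, H2. destruct (union_list l n); reflexivity.
Qed.

Lemma summable_union_list A l : (forall X, A X -> summable X) -> Forall A l -> summable (union_list l).
Proof.
  intros hA Hl. induction Hl; simpl.
  - apply summable_finite. exists 0%nat. unfold emptyS. discriminate.
  - apply summable_union; auto.
Qed.

Lemma not_Laflamme A : (forall X, A X -> summable X) -> ~ Laflamme A.
Proof.
  intros hA L. apply L. exists summable. split; [|split].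
  - split; [|split; [|split]].
    + intros X Y sY s. eapply summable_sub; eauto.
    + apply summable_union.
    + apply summable_finite.
    + apply not_summable_full.
  - exists (fun k X => forall N, psum X N <= INR k). split.
    + intros k f nC. apply not_all_ex_not in nC as [N hN].
      exists N. intros g ag Cg. apply hN. rewrite (psum_ext f g N); auto.
      intros x hx. symmetry. auto.
    + intro X. split.
      * intros [M HM]. destruct (INR_unbounded M) as [k hk]. exists k. intro N.
        specialize (HM N). lra.
      * intros [k Hk]. exists (INR k). exact Hk.
  - intros Y [l [Fl HY]]. eapply summable_almost; eauto. eapply summable_union_list; eauto.
Qed.

Definition tail (X : Sub) (n : nat) : Sub := fun k => X k && (n <=? k)%nat.

Lemma MAD_of A : AD_family A -> strongly_tight A -> MAD A.
Proof.
  intros ad st. split; [exact ad|].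
  intros B adB sub X BX. apply NNPP. intro nAX.
  assert (Xinf : infiniteS X) by (apply (proj1 adB); auto).
  assert (dis : Forall (fun Z => finiteS (inter X Z)) (nil) -> True) by auto.
  assert (HZ : forall l, Forall A l -> Forall (fun Z => finiteS (inter X Z)) l).
  { intros l Hl. eapply Forall_impl; [|exact Hl]. intros Z AZ. simpl.
    apply (proj2 adB); auto. intro E. subst. auto. }
  assert (tinf : forall n, infiniteS (tail X n)).
  { intros n [m Hm]. apply Xinf. exists (n + m)%nat. intros k Xk.
    destruct (le_lt_dec n k) as [le|lt]; [|lia].
    assert (tail X n k = true) by (unfold tail; rewrite Xk; simpl; apply Nat.leb_le; auto).
    specialize (Hm _ H). lia. }
  destruct (st (tail X)) as [A' [[l [Fl HA']] meet]].
  - auto.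
  - intros Y [l [Fl HY]]. exists 0%nat. intros n asub.
    pose proof (L_fin l X Y (HZ l Fl) HY) as fXY.
    exfalso. apply (tinf n). apply (finite_sub _ (union (fun k => tail X n k && negb (Y k)) (inter X Y))).
    + apply finite_union; auto.
    + intros k Hk. unfold union, inter, tail in *. apply andb_true_iff in Hk as [H1 H2].
      rewrite H1, H2. destruct (Y k); reflexivity.
  - destruct (L_fin l X A' (HZ l Fl) HA') as [m Hm].
    destruct (meet m) as [k [Ak Tk]]. unfold tail in Tk. apply andb_true_iff in Tk as [Xk mk].
    apply Nat.leb_le in mk.
    assert (inter X A' k = true) by (unfold inter; rewrite Xk, Ak; auto).
    specialize (Hm _ H). lia.
Qed.

Fixpoint unionN (B : nat -> Sub) (m : nat) : Sub :=
  match m with O => emptyS | S m => union (unionN B m) (B m) end.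

Lemma unionN_incl B k m x : (k < m)%nat -> B k x = true -> unionN B m x = true.
Proof.
  induction m; intros h Bk; [lia|]. simpl. unfold union.
  destruct (Nat.eq_dec k m) as [->|ne]; [rewrite Bk; apply orb_true_r|].
  rewrite IHm by (auto; lia). reflexivity.
Qed.

Lemma exists_max (P : nat -> Prop) n : P 0%nat ->
  exists m, (m <= n)%nat /\ P m /\ forall m', (m < m' <= n)%nat -> ~ P m'.
Proof.
  intro P0. induction n.
  - exists 0%nat. repeat split; auto. intros; lia.
  - destruct (classic (P (S n))) as [h|h].
    + exists (S n). repeat split; auto. intros; lia.
    + destruct IHn as [m [h1 [h2 h3]]]. exists m. repeat split; auto.
      intros m' hm'. destruct (Nat.eq_dec m' (S n)) as [->|ne]; auto. apply h3. lia.
Qed.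

Lemma inf_big (S : Sub) : infiniteS S -> forall b, exists k, S k = true /\ (b <= k)%nat.
Proof.
  intros inf b. apply NNPP. intro nx. apply inf. exists b. intros n Sn.
  destruct (le_lt_dec b n) as [le|lt]; auto. exfalso. apply nx. exists n. auto.
Qed.

Fixpoint mx (a : nat -> nat) (c : nat) : nat :=
  match c with O => O | S c => Nat.max (mx a c) (a c) end.

Lemma mx_spec a c n : (n < c)%nat -> (a n <= mx a c)%nat.
Proof. induction c; intro h; simpl; [lia|]. destruct (Nat.eq_dec n c) as [->|ne]; [lia|].
  specialize (IHc ltac:(lia)). lia. Qed.

Lemma psum_empty N : psum emptyS N = 0.
Proof. induction N; cbn [psum]; [reflexivity|]. rewrite IHN. unfold emptyS. lra. Qed.

Lemma psum_single c N : psum (fun x => Nat.eqb c x) N <= / INR (S c).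
Proof.
  assert (pos : 0 < / INR (S c)) by (apply Rinv_0_lt_compat, lt_0_INR; lia).
  destruct (le_lt_dec (S c) N) as [le|lt].
  - rewrite (psum_stable _ (S c) N); auto.
    + cbn [psum]. rewrite (psum_ext _ emptyS c), psum_empty, Nat.eqb_refl; [lra|].
      intros x hx. unfold emptyS. apply Nat.eqb_neq. lia.
    + intros x hx. apply Nat.eqb_eq in hx. lia.
  - rewrite (psum_ext _ emptyS N), psum_empty; [lra|].
    intros x hx. unfold emptyS. apply Nat.eqb_neq. lia.
Qed.

Lemma diag (B : nat -> Sub) (X : nat -> Sub) :
  (forall n, infiniteS (X n)) ->
  (forall m, finiteP (fun n => almost_subset (X n) (unionN B m))) ->
  exists A, infiniteS A /\ summable A /\ (forall k, finiteS (inter A (B k))) /\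
    (forall n, exists k, A k = true /\ X n k = true).
Proof.
  intros Xinf Hfin.
  assert (H : forall n, exists a, X n a = true /\ (2 ^ n + n <= a)%nat /\
     exists m, (m <= n)%nat /\ unionN B m a = false /\
       forall m', (m < m' <= n)%nat -> almost_subset (X n) (unionN B m')).
  { intro n.
    destruct (exists_max (fun m => ~ almost_subset (X n) (unionN B m)) n) as [m [h1 [h2 h3]]].
    - intro as0. apply (Xinf n). apply (finite_sub _ _ as0). intros k Xk. rewrite Xk. reflexivity.
    - destruct (inf_big _ h2 (2 ^ n + n)) as [a [ha hb]].
      apply andb_true_iff in ha as [ha1 ha2]. apply negb_true_iff in ha2.
      exists a. repeat split; auto. exists m. repeat split; auto.
      intros m' hm'. apply NNPP. apply h3. auto. }
  set (a := fun n => proj1_sig (constructive_indefinite_description _ (H n))).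
  assert (Ha : forall n, X n (a n) = true /\ (2 ^ n + n <= a n)%nat /\
     exists m, (m <= n)%nat /\ unionN B m (a n) = false /\
       forall m', (m < m' <= n)%nat -> almost_subset (X n) (unionN B m')).
  { intro n. unfold a. destruct (constructive_indefinite_description _ (H n)) as [x hx]. exact hx. }
  clearbody a. clear H.
  set (A := fun x => existsb (fun n => Nat.eqb (a n) x) (seq 0 (S x))).
  assert (Aspec : forall x, A x = true <-> exists n, a n = x).
  { intro x. unfold A. rewrite existsb_exists. split.
    - intros [n [_ hn]]. exists n. apply Nat.eqb_eq. auto.
    - intros [n hn]. exists n. split; [apply in_seq|apply Nat.eqb_eq; auto].
      destruct (Ha n) as [_ [h _]]. lia. }
  exists A. split; [|split; [|split]].
  - intros [m hm]. assert (A (a m) = true) by (apply Aspec; eauto).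
    specialize (hm _ H). destruct (Ha m) as [_ [h _]]. lia.
  - exists 2. intro N.
    set (Sg := fun n => fun x => Nat.eqb (a n) x).
    assert (Hj : forall j, psum (unionN Sg j) N <= 2 - 2 * (/ 2) ^ j).
    { induction j; [simpl; rewrite psum_empty; lra|].
      simpl unionN. eapply Rle_trans; [apply psum_union|].
      assert (psum (Sg j) N <= (/2) ^ j).
      { eapply Rle_trans; [apply psum_single|]. rewrite pow_inv.
        apply Rinv_le_contravar; [apply pow_lt; lra|].
        destruct (Ha j) as [_ [h _]]. rewrite <- (pow_INR 2). simpl (INR 2).
        replace (1 + 1) with 2 by lra. apply le_INR.
        replace (2 ^ j)%nat with (Nat.pow 2 j) by reflexivity. lia. }
      simpl pow. lra. }
    eapply Rle_trans; [|apply Rle_trans with (2 - 2 * (/2) ^ N); [apply Hj|]].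
    + apply psum_mono. intros x hx Ax. apply Aspec in Ax as [n hn].
      assert (n < N)%nat by (destruct (Ha n) as [_ [h _]]; lia).
      apply (unionN_incl Sg n); auto. unfold Sg. apply Nat.eqb_eq. auto.
    + pose proof (pow_lt (/2) N ltac:(lra)). lra.
  - intro k. destruct (Hfin (S k)) as [M hM].
    exists (S (mx a (S k + M))). intros x hx. unfold inter in hx.
    apply andb_true_iff in hx as [Ax Bx]. apply Aspec in Ax as [n hn]. subst x.
    assert (n < S k + M)%nat.
    { destruct (le_lt_dec n k) as [le|lt]; [lia|].
      destruct (Ha n) as [_ [_ [m [h1 [h2 h3]]]]].
      assert (m <= k)%nat.
      { destruct (le_lt_dec m k) as [le|lt']; auto.
        pose proof (unionN_incl B k m (a n) lt' Bx). congruence. }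
      specialize (hM n (h3 (S k) ltac:(lia))). lia. }
    pose proof (mx_spec a _ _ H). lia.
  - intro n. exists (a n). split; [apply Aspec; eauto|]. apply (Ha n).
Qed.

Definition decode (t : Sub) : nat -> Sub := fun n k => t (Cantor.to_nat (n, k)).
Definition code (Xs : nat -> Sub) : Sub := fun m => let (n, k) := Cantor.of_nat m in Xs n k.

Lemma decode_code Xs : decode (code Xs) = Xs.
Proof.
  apply functional_extensionality; intro n. apply functional_extensionality; intro k.
  unfold decode, code. rewrite Cantor.cancel_of_to. reflexivity.
Qed.

Definition Bt (lt : Sub -> Sub -> Prop) (en : Sub -> nat -> Sub) (t : Sub)
  (f : forall s, lt s t -> Sub) (k : nat) : Sub :=
  match excluded_middle_informative (lt (en t k) t) with
  | left p => f (en t k) p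
  | right _ => emptyS
  end.

Definition Hyp lt en t (f : forall s, lt s t -> Sub) : Prop :=
  (forall n, infiniteS (decode t n)) /\
  (forall m, finiteP (fun n => almost_subset (decode t n) (unionN (Bt lt en t f) m))).

Definition G lt en (t : Sub) (f : forall s, lt s t -> Sub) : Sub :=
  match excluded_middle_informative (Hyp lt en t f) with
  | left h => proj1_sig (constructive_indefinite_description _
                 (diag (Bt lt en t f) (decode t) (proj1 h) (proj2 h)))
  | right _ => emptyS
  end.

Definition Fc lt (wf : well_founded lt) en : Sub -> Sub := Fix wf (fun _ => Sub) (G lt en).

Lemma Fc_eq lt wf en t : Fc lt wf en t = G lt en t (fun s _ => Fc lt wf en s).
Proof.
  unfold Fc. refine (@Fix_eq Sub lt wf (fun _ => Sub) (G lt en) _ t). intros x f g H.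
  assert (f = g) by (apply functional_extensionality_dep; intro y;
                     apply functional_extensionality_dep; intro p; apply H).
  subst. reflexivity.
Qed.

Lemma Fc_props lt wf en (en_spec : forall t s, lt s t -> exists k, en t k = s) t :
  let F := Fc lt wf en in
  summable (F t) /\ (forall s, lt s t -> finiteS (inter (F t) (F s))) /\
  (Hyp lt en t (fun s _ => F s) -> infiniteS (F t) /\
     forall n, exists k, F t k = true /\ decode t n k = true).
Proof.
  intro F. unfold F. rewrite Fc_eq. unfold G.
  destruct (excluded_middle_informative _) as [h|h].
  - destruct (constructive_indefinite_description _ _) as [A' [inf [sum [ad meet]]]]. simpl.
    split; [auto|split; [|auto]].
    intros s hs. destruct (en_spec t s hs) as [k hk]. specialize (ad k).
    unfold Bt in ad. destruct (excluded_middle_informative (lt (en t k) t)) as [p|p].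
    + rewrite hk in ad. exact ad.
    + rewrite hk in p. contradiction.
  - split; [apply summable_finite; exists 0%nat; unfold emptyS; discriminate|split].
    + intros s _. exists 0%nat. unfold inter, emptyS. simpl. discriminate.
    + intro h'. contradiction.
Qed.

Lemma gen_union_mem A Y Z : gen_ideal A Y -> A Z -> gen_ideal A (union Y Z).
Proof.
  intros [l [Fl HY]] AZ. exists (Z :: l). split; [constructor; auto|].
  apply (finite_sub _ _ HY). intros n H. unfold union in *. simpl in H. unfold union in H.
  destruct (Y n), (Z n), (union_list l n); simpl in *; auto.
Qed.

Lemma gen_union_fin A Y Z : gen_ideal A Y -> finiteS Z -> gen_ideal A (union Y Z).
Proof.
  intros [l [Fl HY]] fZ. exists l. split; auto.
  apply (finite_sub _ (union (fun n => Y n && negb (union_list l n)) Z)).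
  - apply finite_union; auto.
  - intros n H. unfold union in *. destruct (Y n), (Z n), (union_list l n); simpl in *; auto.
Qed.

Theorem mainTheorem11 :
  CH ->
  exists A : Sub -> Prop,
    MAD A /\ strongly_tight A /\ (forall X, A X -> summable X) /\ ~ Laflamme A.
Proof.
  intro ch. destruct (good_order ch) as [lt [wf [tot cnt]]].
  set (en := fun t => proj1_sig (constructive_indefinite_description _ (cnt t))).
  assert (en_spec : forall t s, lt s t -> exists k, en t k = s).
  { intros t s h. unfold en. destruct (constructive_indefinite_description _ (cnt t)) as [e he].
    simpl. apply he. exact h. }
  clearbody en.
  set (F := Fc lt wf en).
  pose proof (Fc_props lt wf en en_spec) as P. fold F in P. simpl in P.
  set (Aff := fun X => exists t, X = F t /\ infiniteS X).
  assert (sumA : forall X, Aff X -> summable X).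
  { intros X [t [-> _]]. apply (P t). }
  assert (ad : AD_family Aff).
  { split; [intros X [t [_ h]]; exact h|].
    intros X Y [s [-> _]] [t [-> _]] ne.
    assert (s <> t) by (intro E; subst; auto).
    destruct (tot s t H) as [h|h].
    - apply (finite_sub _ (inter (F t) (F s))); [apply (P t); auto|].
      intros n hn. unfold inter in *. apply andb_true_iff in hn as [h1 h2]. rewrite h1, h2. auto.
    - apply (P s); auto. }
  assert (st : strongly_tight Aff).
  { intros Xs inf hyp.
    set (t := code Xs).
    assert (dt : decode t = Xs) by apply decode_code.
    assert (Ht : Hyp lt en t (fun s _ => F s)).
    { split; [rewrite dt; auto|].
      intro m. rewrite dt. apply hyp.
      induction m.
      - exists nil. split; [constructor|]. exists 0%nat. intros n hn. simpl in hn.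
        unfold emptyS in hn. discriminate.
      - simpl. unfold Bt at 2.
        destruct (excluded_middle_informative (lt (en t m) t)) as [p|p].
        + destruct (classic (infiniteS (F (en t m)))) as [i|i].
          * apply gen_union_mem; auto. exists (en t m). auto.
          * apply gen_union_fin; auto. apply NNPP. exact i.
        + apply gen_union_fin; auto. exists 0%nat. unfold emptyS. discriminate. }
    destruct (proj2 (proj2 (P t)) Ht) as [i meet].
    exists (F t). split.
    - exists (F t :: nil). split; [constructor; [exists t; auto|constructor]|].
      exists 0%nat. intros n hn. simpl in hn. unfold union, emptyS in hn.
      destruct (F t n); simpl in hn; discriminate.
    - rewrite <- dt. exact meet. }
  exists Aff. split; [apply MAD_of; auto|split; [auto|split; [auto|]]].
  apply not_Laflamme. auto.
Qed.
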